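(* Let $n\ge 2$ and let $A\in\mathbb{R}^{n\times n}$ be a nonnegative hollow tridiagonal matrix (so $A_{ii}=0$ for all $i$ and $A_{ij}=0$ when $|i-j|>1$) such that $A_{i,i+1}A_{i+1,i}=0$ for each $i\in\{1,\dots,n-1\}$, and $A_{i,i+1}>0$ for at least one $i$. Then $r(t):=r\big((1-t)A+tA^{\top}\big)$ is strictly concave in $t$ on $(0,1)$.
   Context: $r(M)$ denotes the spectral radius of a square matrix $M$. *)

(* Defs.v *)
From HB Require Import structures.
From mathcomp Require Import all_boot all_order all_algebra.
From mathcomp Require Import complex.
From mathcomp Require Import boolp classical_sets reals.
Set Implicit Arguments. Unset Strict Implicit. Unset Printing Implicit Defensive.
Import Order.TTheory GRing.Theory Num.Theory.
Local Open Scope ring_scope.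
Local Open Scope classical_set_scope.

Definition cplx_mx (R : rcfType) (n : nat) (A : 'M[R]_n) : 'M[R[i]]_n :=
  map_mx (fun x => x%:C%C) A.

Definition spectrum (R : rcfType) (n : nat) (A : 'M[R]_n) : set R[i] :=
  [set z | root (char_poly (cplx_mx A)) z].

(* Spectral radius r(A) = max { |z| : z eigenvalue of A } (finite nonempty set
   for n >= 1, so sup = max). *)
Definition spectral_radius (R : realType) (n : nat) (A : 'M[R]_n) : R :=
  sup [set ComplexField.Normc.normc z | z in spectrum A].

Definition nonneg_mx (R : realType) (n : nat) (A : 'M[R]_n) : Prop :=
  forall i j, 0 <= A i j.

Definition hollow_mx (R : realType) (n : nat) (A : 'M[R]_n) : Prop :=
  forall i, A i i = 0.

Definition tridiagonal_mx (R : realType) (n : nat) (A : 'M[R]_n) : Prop :=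
  forall i j : 'I_n, (i.+1 < j)%N \/ (j.+1 < i)%N -> A i j = 0.

Definition strictly_concave_on (R : realType) (a b : R) (f : R -> R) : Prop :=
  forall s t l : R, a < s < b -> a < t < b -> s != t -> 0 < l < 1 ->
    (1 - l) * f s + l * f t < f ((1 - l) * s + l * t).

(* Main.v *)
Require Import Defs.
From HB Require Import structures.
From mathcomp Require Import all_boot all_order all_algebra.
From mathcomp Require Import complex.
From mathcomp Require Import boolp classical_sets reals.
From mathcomp Require Import ring lra zify.
Import Order.TTheory GRing.Theory Num.Theory.
Local Open Scope ring_scope.
Local Open Scope classical_set_scope.

Section S.
Variable R : realType.
Implicit Types n : nat.

Lemma entry_id (n : nat) (A : 'M[R]_n.+1) (t p q : R) :
  0 < p -> 0 < q -> t = p ^+ 2 -> 1 - t = q ^+ 2 ->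
  nonneg_mx A -> hollow_mx A -> tridiagonal_mx A ->
  (forall i j : 'I_n.+1, nat_of_ord j = i.+1 -> A i j * A j i = 0) ->
  forall i j : 'I_n.+1,
  ((1 - t) *: A + t *: A^T) i j =
  (p * q) * (\prod_(0 <= k < i) (if 0 < A (inord k) (inord k.+1) then p / q else q / p))
   * (A i j + A j i) /
   (\prod_(0 <= k < j) (if 0 < A (inord k) (inord k.+1) then p / q else q / p)).
Proof.
move=> p0 q0 ht h1t Ann Ah At Ap i j.
set g := fun k => if 0 < A (inord k) (inord k.+1) then p / q else q / p.
have gn0 : forall k, g k != 0.
  by move=> k; rewrite /g; case: ifP => _; rewrite mulf_neq0 ?invr_eq0 ?gt_eqF.
have en0 : forall m, \prod_(0 <= k < m) g k != 0.
  by move=> m; rewrite prodf_seq_neq0; apply/allP => k _; apply: gn0.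
rewrite !mxE.
have [ji|nji] := eqVneq (nat_of_ord j) i.+1.
  rewrite ji big_nat_recr //= /g.
  have -> : inord i = i by apply: inord_val.
  have -> : inord i.+1 = j by apply: val_inj; rewrite /= inordK // -ji.
  have := Ap i j ji; have := Ann i j; have := Ann j i.
  case: ltP => Hij Hji Hij' Hp.
    have Aji : A j i = 0.
      by move/eqP: Hp; rewrite mulf_eq0 gt_eqF //= => /eqP.
    rewrite Aji h1t; move: (\prod_(0 <= k < i) _) (en0 i) => E E0; field.
    by rewrite E0 !gt_eqF.
  have Aij : A i j = 0 by apply/eqP; rewrite eq_le; apply/andP; split; assumption.
  rewrite Aij h1t ht; move: (\prod_(0 <= k < i) _) (en0 i) => E E0; field.
  by rewrite E0 !gt_eqF.
have [ij|nij] := eqVneq (nat_of_ord i) j.+1.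
  rewrite ij big_nat_recr //= /g.
  have -> : inord j = j by apply: inord_val.
  have -> : inord j.+1 = i by apply: val_inj; rewrite /= inordK // -ij.
  have := Ap j i ij; have := Ann i j; have := Ann j i.
  case: ltP => Hji Hij Hji' Hp.
    have Aij : A i j = 0.
      by move/eqP: Hp; rewrite mulf_eq0 gt_eqF //= => /eqP.
    rewrite Aij h1t ht; move: (\prod_(0 <= k < j) _) (en0 j) => E E0; field.
    by rewrite E0 !gt_eqF.
  have Aji : A j i = 0 by apply/eqP; rewrite eq_le; apply/andP; split; assumption.
  rewrite Aji h1t ht; move: (\prod_(0 <= k < j) _) (en0 j) => E E0; field.
  by rewrite E0 !gt_eqF.
have [Aij Aji] : A i j = 0 /\ A j i = 0.
  have [eij|neij] := eqVneq i j; first by rewrite eij Ah.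
  have H : (i.+1 < j)%N \/ (j.+1 < i)%N.
    have : nat_of_ord i != nat_of_ord j by [].
    move: nji nij; move: (nat_of_ord i) (nat_of_ord j) => a b.
    move=> /eqP h1 /eqP h2 /eqP h3; lia.
  split; apply: At => //; case: H; [right|left] => //.
by rewrite Aij Aji !(mulr0, mul0r, addr0).
Qed.

Lemma entry_ex (n : nat) (A : 'M[R]_n.+1) (t p q : R) :
  0 < p -> 0 < q -> t = p ^+ 2 -> 1 - t = q ^+ 2 ->
  nonneg_mx A -> hollow_mx A -> tridiagonal_mx A ->
  (forall i j : 'I_n.+1, nat_of_ord j = i.+1 -> A i j * A j i = 0) ->
  exists e : 'I_n.+1 -> R, (forall i, e i != 0) /\
  forall i j : 'I_n.+1,
  ((1 - t) *: A + t *: A^T) i j = (p * q) * e i * (A i j + A j i) / e j.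
Proof.
move=> p0 q0 ht h1t Ann Ah At Ap.
exists (fun i : 'I_n.+1 => \prod_(0 <= k < i) (if 0 < A (inord k) (inord k.+1) then p / q else q / p)).
split; last exact: entry_id.
move=> i; rewrite prodf_seq_neq0; apply/allP => k _.
by case: ifP => _; rewrite mulf_neq0 ?invr_eq0 ?gt_eqF.
Qed.


Lemma eig_sim (F : fieldType) (n : nat) (X D Di : 'M[F]_n) (a : F) :
  Di *m D = 1%:M -> D *m Di = 1%:M ->
  eigenvalue (D *m X *m Di) a = eigenvalue X a.
Proof.
move=> h1 h2; apply/eigenvalueP/eigenvalueP => -[v Hv v0].
  exists (v *m D).
    have := congr1 (mulmx^~ D) Hv.
    by rewrite -!mulmxA h1 mulmx1 !mulmxA -scalemxAl.
  apply: contra v0 => /eqP H.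
  by rewrite -[v]mulmx1 -h2 mulmxA H mul0mx.
exists (v *m Di).
  by rewrite !mulmxA -[v *m Di *m D]mulmxA h1 mulmx1 Hv scalemxAl.
apply: contra v0 => /eqP H.
by rewrite -[v]mulmx1 -h1 mulmxA H mul0mx.
Qed.

Lemma eig_scale (F : fieldType) (n : nat) (X : 'M[F]_n) (c a : F) :
  c != 0 -> eigenvalue (c *: X) a = eigenvalue X (a / c).
Proof.
move=> c0; apply/eigenvalueP/eigenvalueP => -[v Hv v0]; exists v => //.
  have := congr1 (fun w => c^-1 *: w) Hv.
  by rewrite -scalemxAr !scalerA mulVf // scale1r mulrC.
by rewrite -scalemxAr Hv scalerA mulrCA mulfV // mulr1.
Qed.

End S.
Section T.
Variable R : rcfType.
Lemma normc_real (s : R) : 0 <= s -> ComplexField.Normc.normc (s%:C)%C = s.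
Proof.
move=> s0; rewrite /ComplexField.Normc.normc /=.
by rewrite expr0n /= addr0 sqrtr_sqr ger0_norm.
Qed.

Lemma spectrum_scale (n : nat) (M B : 'M[R]_n) (s : R) (e : 'I_n -> R) :
  0 < s -> (forall i, e i != 0) ->
  (forall i j, M i j = s * e i * B i j / e j) ->
  [set ComplexField.Normc.normc z | z in spectrum M] =
  [set s * x | x in [set ComplexField.Normc.normc z | z in spectrum B]].
Proof.
move=> s0 e0 HM.
pose D := diag_mx (\row_i ((e i)%:C)%C : 'rV[R[i]]_n).
pose Di := diag_mx (\row_i ((e i)^-1%:C)%C : 'rV[R[i]]_n).
have h1 : Di *m D = 1%:M.
  rewrite mulmx_diag; apply/matrixP => i j; rewrite !mxE.
  by rewrite -rmorphM mulVf.
have h2 : D *m Di = 1%:M.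
  rewrite mulmx_diag; apply/matrixP => i j; rewrite !mxE.
  by rewrite -rmorphM mulfV.
have hc : cplx_mx M = D *m ((s%:C)%C *: cplx_mx B) *m Di.
  rewrite mul_mx_diag mul_diag_mx; apply/matrixP => i j; rewrite !mxE HM.
  by rewrite !rmorphM; congr (_ * _); rewrite [RHS]mulrCA mulrA.
have sc0 : (s%:C)%C != 0 :> R[i].
  by rewrite (inj_eq (@complexI R)) gt_eqF.
have Hsp : forall z : R[i], spectrum M z <-> spectrum B (z / (s%:C)%C).
  move=> z; rewrite /spectrum; rewrite /=.
  rewrite -!eigenvalue_root_char hc (eig_sim _ _ _ _ _ _ h1 h2).
  by rewrite (eig_scale _ _ _ _ _ sc0).
apply/seteqP; split => x /=.
  case=> z Hz <-; exists (ComplexField.Normc.normc (z / (s%:C)%C)).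
    by exists (z / (s%:C)%C) => //; apply/Hsp.
  by rewrite ComplexField.Normc.normcM ComplexField.Normc.normcV normc_real ?ltW // mulrC divfK ?gt_eqF.
case=> y [z Hz <-] <-; exists ((s%:C)%C * z).
  by apply/Hsp; rewrite mulrAC divff // mul1r.
by rewrite ComplexField.Normc.normcM normc_real // ltW.
Qed.

Lemma sum_ge_mem (r : seq R[i]) (z : R[i]) : z \in r ->
  ComplexField.Normc.normc z <= \sum_(w <- r) ComplexField.Normc.normc w.
Proof.
elim: r => // w r IH; rewrite in_cons big_cons => /orP[/eqP->|zr].
  rewrite lerDl; apply: sumr_ge0 => x _.
  by rewrite /ComplexField.Normc.normc; case: x => a b; apply: sqrtr_ge0.
rewrite (le_trans (IH zr)) // lerDr.
by rewrite /ComplexField.Normc.normc; case: w => a b; apply: sqrtr_ge0.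
Qed.

Lemma spectrum_bounded (n : nat) (M : 'M[R]_n) :
  exists b, forall z, spectrum M z -> ComplexField.Normc.normc z <= b.
Proof.
have [r Hr] := closed_field_poly_normal (char_poly (cplx_mx M)).
exists (\sum_(w <- r) ComplexField.Normc.normc w) => z Hz.
apply: sum_ge_mem.
move: Hz; rewrite /spectrum /= Hr (monicP (char_poly_monic _)) scale1r.
by rewrite root_prod_XsubC.
Qed.

Lemma spectrum_nonempty (n : nat) (M : 'M[R]_n.+1) : exists z, spectrum M z.
Proof.
have [z Hz] := Theorem7' (cplx_mx M) (ltn0Sn n).
by exists z; rewrite /spectrum /= -eigenvalue_root_char.
Qed.

Lemma spectrum_nonzero (n : nat) (B : 'M[R]_n) :
  B^T = B -> B != 0 -> exists z, spectrum B z /\ z != 0.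
Proof.
move=> Bs B0; apply/not_existsP => Hn.
have H0 : forall z, spectrum B z -> z = 0.
  move=> z Hz; have := Hn z; apply: contra_notP => nz; split => //; exact/eqP.
set C := cplx_mx B.
have Cn : C \is normalmx.
  apply: symmetric_normalmx.
    apply/is_hermitianmxP; rewrite expr0 scale1r; apply/matrixP => i j.
    by rewrite !mxE -[in LHS]Bs mxE.
  by apply/mxOverP => i j; rewrite mxE; apply/complex_realP; exists (B i j).
have /orthomx_spectralP HC := Cn.
set P := spectralmx C in HC; set sp := spectral_diag C in HC.
have Pu : P \in unitmx by apply: spectral_unit.
have sp0 : sp = 0.
  apply/rowP => i; rewrite mxE; apply: H0.
  rewrite /spectrum /= -eigenvalue_root_char -/C HC.
  rewrite (eig_sim _ _ _ _ _ _ (mulmxV Pu) (mulVmx Pu)).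
  apply/eigenvalueP; exists (delta_mx 0 i).
    apply/matrixP => a b; rewrite mul_mx_diag !mxE.
    case: (eqVneq b i) => [->|nb]; first by rewrite mulrC.
    by rewrite andbF /= mul0r mulr0.
  apply/eqP => /matrixP /(_ 0 i); rewrite !mxE !eqxx /=.
  by move/eqP; rewrite oner_eq0.
move/negP: B0; apply; apply/eqP/matrixP => i j.
have /matrixP /(_ i j) := HC.
have -> : diag_mx sp = 0 by apply/matrixP => a b; rewrite sp0 !mxE mul0rn.
rewrite mulmx0 mul0mx !mxE => /eqP.
by rewrite (inj_eq (@complexI R)) => /eqP.
Qed.
End T.

Section U.
Variable R : realType.

Lemma sup_scale (X : set R) (s : R) : 0 < s -> X !=set0 -> has_ubound X ->
  sup [set s * x | x in X] = s * sup X.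
Proof.
move=> s0 Xn Xb; have hs : has_sup X by split.
have Yn : [set s * x | x in X] !=set0.
  by case: Xn => x Xx; exists (s * x); exists x.
have hY : has_sup [set s * x | x in X].
  split => //; exists (s * sup X) => y [x Xx <-].
  by rewrite ler_pM2l //; exact: sup_upper_bound hs _ Xx.
apply/le_anti/andP; split.
  apply: ge_sup Yn _ => y [x Xx <-].
  by rewrite ler_pM2l //; exact: sup_upper_bound hs _ Xx.
rewrite mulrC -ler_pdivlMr //; apply: ge_sup Xn _ => x Xx.
rewrite ler_pdivlMr // mulrC; apply: sup_upper_bound hY _ _.
by exists x.
Qed.

Lemma sqrt_concave (c : R) : 0 < c ->
  strictly_concave_on 0 1 (fun t => Num.sqrt t * Num.sqrt (1 - t) * c).
Proof.
move=> c0 s t l /andP[s0 s1] /andP[t0 t1] st /andP[l0 l1].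
set m := (1 - l) * s + l * t.
have m0 : 0 < m by rewrite /m; nra.
have m1 : m < 1 by rewrite /m; nra.
have sq : forall x : R, 0 < x < 1 -> (Num.sqrt x * Num.sqrt (1 - x)) ^+ 2 = x * (1 - x)
   /\ 0 <= Num.sqrt x * Num.sqrt (1 - x).
  move=> x /andP[x0 x1]; split; last by rewrite mulr_ge0 ?sqrtr_ge0.
  by rewrite exprMn !sqr_sqrtr // ?subr_ge0 ltW.
have [hu u0] := sq s ltac:(by apply/andP).
have [hv v0] := sq t ltac:(by apply/andP).
have [hw w0] := sq m ltac:(by apply/andP).
move: hu u0 hv v0 hw w0.
move: (Num.sqrt s * Num.sqrt (1 - s)) (Num.sqrt t * Num.sqrt (1 - t)) (Num.sqrt m * Num.sqrt (1 - m)) => u v w hu u0 hv v0 hw w0.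
have st2 : 0 < (s - t) ^+ 2.
  by rewrite lt_def sqr_ge0 andbT sqrf_eq0 subr_eq0.
have A4 : 0 < l * (1 - l) * (s - t) ^+ 2 by apply: mulr_gt0 => //; apply: mulr_gt0 => //; rewrite subr_gt0.
have A2 : 0 <= l * (1 - l) * (u - v) ^+ 2 by apply: mulr_ge0; [apply: mulr_ge0; [exact: ltW | rewrite subr_ge0; exact: ltW] | exact: sqr_ge0].
set X := (1 - l) * u + l * v.
have eX : X ^+ 2 = (1 - l) ^+ 2 * u ^+ 2 + 2 * l * (1 - l) * (u * v) + l ^+ 2 * v ^+ 2.
  by rewrite /X; ring.
have eA2 : l * (1 - l) * (u - v) ^+ 2 = l * (1 - l) * (u ^+ 2 - 2 * (u * v) + v ^+ 2).
  by ring.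
rewrite hu hv in eX eA2; rewrite eA2 in A2.
have key : X ^+ 2 < w ^+ 2 by rewrite eX hw /m; nra.
have Xw : X < w by nra.
have -> : (1 - l) * (u * c) + l * (v * c) = X * c by rewrite /X; ring.
by rewrite ltr_pM2r.
Qed.
End U.

Theorem corollary1 (R : realType) (n : nat) (A : 'M[R]_n) :
  (2 <= n)%N ->
  nonneg_mx A -> hollow_mx A -> tridiagonal_mx A ->
  (forall i j : 'I_n, nat_of_ord j = i.+1 -> A i j * A j i = 0) ->
  (exists i j : 'I_n, nat_of_ord j = i.+1 /\ 0 < A i j) ->
  strictly_concave_on 0 1
    (fun t : R => spectral_radius ((1 - t) *: A + t *: A^T)).
Proof.
case: n A => [|[|n]] A //= _ Ann Ah At Ap [i0 [j0 [ij0 Apos]]].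
pose B := \matrix_(i, j) (A i j + A j i) : 'M[R]_n.+2.
pose rho := spectral_radius B.
have Bs : B^T = B by apply/matrixP => i j; rewrite !mxE addrC.
have B0 : B != 0.
  apply/eqP => /matrixP /(_ i0 j0); rewrite !mxE => /eqP.
  rewrite paddr_eq0 ?Ann // => /andP[/eqP h _].
  by move: Apos; rewrite h ltxx.
have [bnd Hb] := spectrum_bounded _ _ B.
have hsB : has_sup [set ComplexField.Normc.normc z | z in spectrum B].
  split.
    have [z Hz] := spectrum_nonempty _ _ B.
    by exists (ComplexField.Normc.normc z); exists z.
  by exists bnd => x [z Hz <-]; exact: Hb.
have rho0 : 0 < rho.
  have [z [Hz z0]] := spectrum_nonzero _ _ B Bs B0.
  apply: (@lt_le_trans _ _ (ComplexField.Normc.normc z)).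
    rewrite lt_def; apply/andP; split.
      by apply/eqP => /ComplexField.Normc.eq0_normc /eqP; apply/negP.
    by case: (z) => a b; apply: sqrtr_ge0.
  by apply: sup_upper_bound hsB _ _; exists z.
have E : forall t, 0 < t < 1 ->
    spectral_radius ((1 - t) *: A + t *: A^T) = Num.sqrt t * Num.sqrt (1 - t) * rho.
  move=> t /andP[t0 t1].
  have p0 : 0 < Num.sqrt t by rewrite sqrtr_gt0.
  have q0 : 0 < Num.sqrt (1 - t) by rewrite sqrtr_gt0 subr_gt0.
  have ht : t = Num.sqrt t ^+ 2 by rewrite sqr_sqrtr // ltW.
  have h1t : 1 - t = Num.sqrt (1 - t) ^+ 2 by rewrite sqr_sqrtr // subr_ge0 ltW.
  have [e [e0 HM]] := entry_ex _ _ A t _ _ p0 q0 ht h1t Ann Ah At Ap.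
  have HM' : forall i j, ((1 - t) *: A + t *: A^T) i j =
      (Num.sqrt t * Num.sqrt (1 - t)) * e i * B i j / e j.
    by move=> i j; rewrite HM mxE.
  rewrite /spectral_radius (spectrum_scale _ _ _ _ _ e (mulr_gt0 p0 q0) e0 HM').
  by rewrite sup_scale ?mulr_gt0 //; case: hsB.
move=> s t l /andP[s0 s1] /andP[t0 t1] st /andP[l0 l1] /=.
have m01 : 0 < (1 - l) * s + l * t < 1 by apply/andP; split; nra.
have hs : 0 < s < 1 by rewrite s0 s1.
have ht : 0 < t < 1 by rewrite t0 t1.
rewrite (E s hs) (E t ht) (E _ m01).
apply: (sqrt_concave _ _ rho0) => //; by rewrite l0 l1.
Qed.
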